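(* Let $T$ be a node-weighted MFQST with Steiner point cost $c>0$ on sources $z_1,\dots,z_n$ and sink $z_{BS}$, and suppose $T$ contains exactly $k$ Steiner points. Then $$k\le\frac1c\left(L_c(BST(Z))-\frac{1}{n+k+1}\sum_{i=1}^n|z_iz_{BS}|^2\right).$$
   Context: Let $Z=\{z_1,\dots,z_n\}\subset\mathbb{R}^2$ ($n\ge 1$) be a set of sources and $z_{BS}\in\mathbb{R}^2\setminus Z$ a sink; each source has supply $1$. A flow-dependent quadratic Steiner tree (FQST) consists of a finite set $S\subset\mathbb{R}^2$ of Steiner points and a tree $T$ with vertex set $Z\cup S\cup\{z_{BS}\}$ whose edges are directed towards $z_{BS}$. Every node other than the sink has exactly one out-edge, and the sink has none. Each edge $e$ carries a positive flow $f(e)$ such that: - at each source, the flow on its out-edge minus the total flow on its in-edges equals $1$; - at each Steiner point, the out-flow equals the total in-flow; - the sink receives total flow $n$. The cost is $L(T)=\sum_{e\in E(T)} f(e)|e|^2$. A node-weighted MFQST minimises $L_c(T)=L(T)+c|S|$ over all FQSTs. Beaded spanning tree $BST(Z)$: take a Euclidean minimum spanning tree on $Z\cup\{z_{BS}\}$, directed towards $z_{BS}$, with flows determined as for an FQST. On each edge $e$ with flow $f(e)$, insert the minimum number of equally spaced degree-two Steiner points along the segment so that every resulting edge has length at most $\sqrt{2c/f(e)}$. The resulting FQST is $BST(Z)$. *)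

(* Defs.v *)
From Stdlib Require Import Reals Lra Lia List.
Import ListNotations.
Open Scope R_scope.

Definition point : Type := (R * R)%type.

Definition dist2 (p q : point) : R :=
  (fst p - fst q) ^ 2 + (snd p - snd q) ^ 2.

Definition dist (p q : point) : R := sqrt (dist2 p q).

Definition sumR (l : list nat) (g : nat -> R) : R :=
  fold_right (fun u acc => g u + acc) 0 l.

(** A tree on the nodes [0 .. N] directed towards the sink [N]:
    every node [v < N] has exactly one out-edge [v -> par v] (the sink
    has none), and following out-edges from any node reaches the sink
    (so there is no cycle and the underlying graph is a spanning tree). *)
Definition is_sink_tree (N : nat) (par : nat -> nat) : Prop :=
  (forall v, (v < N)%nat -> (par v <= N)%nat /\ par v <> v) /\
  (forall v, (v < N)%nat -> exists m, Nat.iter m par v = N).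

Definition inflow (N : nat) (par : nat -> nat) (f : nat -> R) (w : nat) : R :=
  sumR (filter (fun u => Nat.eqb (par u) w) (seq 0 N)) f.

(** Flow on a sink tree on nodes [0..N] whose sources are the nodes [0..n-1]
    (supply 1 each); [f v] is the flow on the out-edge of [v]. *)
Definition valid_flow (n N : nat) (par : nat -> nat) (f : nat -> R) : Prop :=
  (forall v, (v < N)%nat ->
     0 < f v /\ f v - inflow N par f v = (if Nat.ltb v n then 1 else 0)) /\
  inflow N par f N = INR n.

(** Candidate FQST data: [fk] Steiner points, with positions [fsp 0 .. fsp (fk-1)].
    Nodes: [0..n-1] sources, [n..n+fk-1] Steiner points, [n+fk] the sink. *)
Record fqst := mkFQST {
  fk : nat;
  fsp : nat -> point;
  fpar : nat -> nat;
  fflow : nat -> R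
}.

Definition fpos (n : nat) (z : nat -> point) (zBS : point) (T : fqst) (v : nat) : point :=
  if Nat.ltb v n then z v
  else if Nat.ltb v (n + fk T) then fsp T (v - n) else zBS.

Definition is_FQST (n : nat) (z : nat -> point) (zBS : point) (T : fqst) : Prop :=
  let N := (n + fk T)%nat in
  is_sink_tree N (fpar T) /\
  valid_flow n N (fpar T) (fflow T) /\
  (* the vertices are distinct points: Z, S, {zBS} form the vertex set *)
  (forall u v, (u <= N)%nat -> (v <= N)%nat ->
     fpos n z zBS T u = fpos n z zBS T v -> u = v).

Definition L (n : nat) (z : nat -> point) (zBS : point) (T : fqst) : R :=
  sumR (seq 0 (n + fk T))
    (fun v => fflow T v * dist2 (fpos n z zBS T v) (fpos n z zBS T (fpar T v))).

Definition Lc (c : R) (n : nat) (z : nat -> point) (zBS : point) (T : fqst) : R :=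
  L n z zBS T + c * INR (fk T).

Definition is_MFQST (c : R) (n : nat) (z : nat -> point) (zBS : point) (T : fqst) : Prop :=
  is_FQST n z zBS T /\
  forall T', is_FQST n z zBS T' -> Lc c n z zBS T <= Lc c n z zBS T'.

(** Terminal positions: sources [0..n-1], sink [n]. *)
Definition tpos (n : nat) (z : nat -> point) (zBS : point) (v : nat) : point :=
  if Nat.ltb v n then z v else zBS.

Definition tree_length (n : nat) (z : nat -> point) (zBS : point) (p : nat -> nat) : R :=
  sumR (seq 0 n) (fun v => dist (tpos n z zBS v) (tpos n z zBS (p v))).

Definition is_EMST (n : nat) (z : nat -> point) (zBS : point) (p : nat -> nat) : Prop :=
  is_sink_tree n p /\
  forall p', is_sink_tree n p' -> tree_length n z zBS p <= tree_length n z zBS p'.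

(** [m v] is the minimum number of equally spaced beads to put on the edge
    [v -> p v] (flow [f v]) so that each resulting edge has length at most
    sqrt(2c / f v). *)
Definition bead_counts (c : R) (n : nat) (z : nat -> point) (zBS : point)
    (p : nat -> nat) (f : nat -> R) (m : nat -> nat) : Prop :=
  forall v, (v < n)%nat ->
    let d := dist (tpos n z zBS v) (tpos n z zBS (p v)) in
    let s := sqrt (2 * c / f v) in
    d / INR (S (m v)) <= s /\
    (forall j, (j < m v)%nat -> s < d / INR (S j)).

(** L_c(BST(Z)): edge [v -> p v] is split into [m v + 1] equal edges, each of
    flow [f v]; plus cost c for each of the [sum m] Steiner (bead) points. *)
Definition BST_cost (c : R) (n : nat) (z : nat -> point) (zBS : point)
    (p : nat -> nat) (f : nat -> R) (m : nat -> nat) : R :=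
  sumR (seq 0 n) (fun v =>
    INR (S (m v)) * (f v * (dist (tpos n z zBS v) (tpos n z zBS (p v)) / INR (S (m v))) ^ 2))
  + c * sumR (seq 0 n) (fun v => INR (m v)).

(* Main.v *)
Require Import Defs.
From Stdlib Require Import Reals List Lra Lia Arith.
Import ListNotations.
Open Scope R_scope.


Lemma sumR_app l1 l2 g : sumR (l1 ++ l2) g = sumR l1 g + sumR l2 g.
Proof. induction l1; simpl; [lra|]. unfold sumR in *; simpl; rewrite IHl1; lra. Qed.

Lemma sumR_cons a l g : sumR (a :: l) g = g a + sumR l g.
Proof. reflexivity. Qed.

Lemma sumR_nil g : sumR [] g = 0.
Proof. reflexivity. Qed.

Lemma sumR_ext_in l F G : (forall x, In x l -> F x = G x) -> sumR l F = sumR l G.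
Proof. induction l; intros H; rewrite ?sumR_nil, ?sumR_cons; auto.
  rewrite H by (simpl; auto). rewrite IHl; auto. intros; apply H; simpl; auto. Qed.

Lemma sumR_le_in l F G : (forall x, In x l -> F x <= G x) -> sumR l F <= sumR l G.
Proof. induction l; intros H; rewrite ?sumR_nil, ?sumR_cons; [lra|].
  assert (F a <= G a) by (apply H; simpl; auto).
  assert (sumR l F <= sumR l G) by (apply IHl; intros; apply H; simpl; auto). lra. Qed.

Lemma sumR_plus l F G : sumR l (fun u => F u + G u) = sumR l F + sumR l G.
Proof. induction l; rewrite ?sumR_nil, ?sumR_cons; [lra|]. rewrite IHl; lra. Qed.

Lemma sumR_scal l a F : sumR l (fun u => a * F u) = a * sumR l F.
Proof. induction l; rewrite ?sumR_nil, ?sumR_cons; [lra|]. rewrite IHl; lra. Qed.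

Lemma sumR_filter (P : nat -> bool) l g :
  sumR (filter P l) g = sumR l (fun u => if P u then g u else 0).
Proof. induction l; simpl filter; rewrite ?sumR_nil, ?sumR_cons; auto. destruct (P a); rewrite ?sumR_cons, IHl; lra. Qed.

Lemma sumR_const l a : sumR l (fun _ => a) = INR (length l) * a.
Proof. induction l; rewrite ?sumR_nil, ?sumR_cons; simpl length; [simpl; lra|].
  rewrite IHl, S_INR; lra. Qed.

Lemma sumR_nonneg l F : (forall x, In x l -> 0 <= F x) -> 0 <= sumR l F.
Proof. intros H. replace 0 with (sumR l (fun _ => 0)) at 1.
  - apply sumR_le_in. auto.
  - rewrite sumR_const; lra. Qed.

Lemma sumR_zero l F : (forall x, In x l -> F x = 0) -> sumR l F = 0.
Proof. intros H. rewrite (sumR_ext_in l F (fun _ => 0)) by auto. rewrite sumR_const; lra. Qed.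

Lemma sumR_ind a len t (F : nat -> R) :
  sumR (seq a len) (fun j => if Nat.eqb j t then F j else 0) =
  if andb (Nat.leb a t) (Nat.ltb t (a + len)) then F t else 0.
Proof.
  revert a. induction len; intros a; cbn [seq].
  - rewrite sumR_nil. destruct (Nat.leb a t) eqn:E1; destruct (Nat.ltb t (a+0)) eqn:E2; simpl; auto.
    apply Nat.leb_le in E1; apply Nat.ltb_lt in E2; lia.
  - rewrite sumR_cons, IHlen. destruct (Nat.eqb a t) eqn:E.
    + apply Nat.eqb_eq in E; subst.
      replace (Nat.leb (S t) t) with false by (symmetry; apply Nat.leb_gt; lia).
      replace (Nat.leb t t) with true by (symmetry; apply Nat.leb_le; lia).
      replace (Nat.ltb t (t + S len)) with true by (symmetry; apply Nat.ltb_lt; lia).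
      simpl; lra.
    + apply Nat.eqb_neq in E.
      replace (S a + len)%nat with (a + S len)%nat by lia.
      destruct (Nat.leb (S a) t) eqn:E1; destruct (Nat.leb a t) eqn:E2; simpl;
        try lra;
      apply Nat.leb_le in E1 || apply Nat.leb_gt in E1;
      apply Nat.leb_le in E2 || apply Nat.leb_gt in E2; lia.
Qed.

Fixpoint off (m : nat -> nat) (v : nat) : nat :=
  match v with O => O | S v' => (off m v' + m v')%nat end.

Lemma off_mono m a b : (a <= b)%nat -> (off m a <= off m b)%nat.
Proof. induction 1; simpl; lia. Qed.

Lemma off_disj m v v' t t' : (t < m v)%nat -> (t' < m v')%nat ->
  (off m v + t = off m v' + t')%nat -> v = v' /\ t = t'.
Proof.
  intros H1 H2 E. destruct (Nat.lt_trichotomy v v') as [L|[L|L]].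
  - assert (off m (S v) <= off m v')%nat by (apply off_mono; lia). simpl in *; lia.
  - subst; lia.
  - assert (off m (S v') <= off m v)%nat by (apply off_mono; lia). simpl in *; lia.
Qed.

Lemma off_decomp m k s : (s < off m k)%nat ->
  exists v j, (v < k)%nat /\ (j < m v)%nat /\ s = (off m v + j)%nat.
Proof.
  induction k; simpl; intros H; [lia|].
  destruct (Nat.lt_ge_cases s (off m k)) as [L|L].
  - destruct (IHk L) as (v & j & ?&?&?). exists v, j; repeat split; auto; lia.
  - exists k, (s - off m k)%nat; repeat split; lia.
Qed.

Lemma sumR_blocks m a k F :
  sumR (seq a (off m k)) F = sumR (seq 0 k) (fun v => sumR (seq (a + off m v) (m v)) F).
Proof.
  induction k; cbn [off]; auto.
  rewrite seq_app, sumR_app, IHk, seq_S, sumR_app. cbn [plus]. rewrite sumR_cons, sumR_nil. lra.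
Qed.


Fixpoint findk (P : nat -> bool) (k fuel : nat) : nat :=
  match fuel with O => k | S fu => if P k then k else findk P (S k) fu end.

Lemma findk_spec P fuel : forall k m, (k <= m < k + fuel)%nat -> P m = true ->
  P (findk P k fuel) = true /\ (findk P k fuel <= m)%nat /\
  (forall j, (k <= j < findk P k fuel)%nat -> P j = false).
Proof.
  induction fuel; intros k m Hm HP; [lia|]. cbn [findk].
  destruct (P k) eqn:E.
  - repeat split; auto; [lia| intros; lia].
  - assert (k <> m) by (intro; subst; congruence).
    destruct (IHfuel (S k) m ltac:(lia) HP) as (A&B&C). repeat split; auto.
    intros j Hj. destruct (Nat.eq_dec j k); [subst; auto|]. apply C; lia.
Qed.

Section Depth.
Variable N : nat.
Variable par : nat -> nat.
Hypothesis Hst : is_sink_tree N par.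

Definition Pd (v : nat) := fun m => Nat.eqb (Nat.iter m par v) N.
Definition dep (v : nat) : nat := findk (Pd v) 0 (S N).

Lemma iter_before v m1 : (v < N)%nat -> (forall j, (j < m1)%nat -> Nat.iter j par v <> N) ->
  forall j, (j < m1)%nat -> (Nat.iter j par v < N)%nat.
Proof.
  intros Hv Hm. induction j; intros Hj; simpl; auto.
  assert (Nat.iter j par v < N)%nat by (apply IHj; lia).
  destruct Hst as [H1 _]. destruct (H1 _ H).
  specialize (Hm (S j) Hj). simpl in Hm. lia.
Qed.

Lemma min_le_N v m1 : (v < N)%nat -> Nat.iter m1 par v = N ->
  (forall j, (j < m1)%nat -> Nat.iter j par v <> N) -> (m1 <= N)%nat.
Proof.
  intros Hv Hm Hmin.
  assert (ND : NoDup (map (fun j => Nat.iter j par v) (seq 0 m1))).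
  { apply NoDup_map_NoDup_ForallPairs; [|apply seq_NoDup].
    intros a b Ha Hb E. apply in_seq in Ha; apply in_seq in Hb.
    destruct (Nat.lt_trichotomy a b) as [L|[L|L]]; auto; exfalso.
    - apply (Hmin (m1 - b + a)%nat); [lia|].
      replace (m1 - b + a)%nat with ((m1 - b) + a)%nat by lia.
      rewrite Nat.iter_add, E, <- Nat.iter_add. replace (m1 - b + b)%nat with m1 by lia; auto.
    - apply (Hmin (m1 - a + b)%nat); [lia|].
      replace (m1 - a + b)%nat with ((m1 - a) + b)%nat by lia.
      rewrite Nat.iter_add, <- E, <- Nat.iter_add. replace (m1 - a + a)%nat with m1 by lia; auto. }
  assert (IN : incl (map (fun j => Nat.iter j par v) (seq 0 m1)) (seq 0 N)).
  { intros y Hy. apply in_map_iff in Hy. destruct Hy as (j & <- & Hj).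
    apply in_seq in Hj. apply in_seq. split; [lia|].
    pose proof (iter_before v m1 Hv Hmin j ltac:(lia)). lia. }
  pose proof (NoDup_incl_length ND IN). rewrite length_map, !length_seq in H. lia.
Qed.

Lemma dep_spec v : (v < N)%nat ->
  Nat.iter (dep v) par v = N /\ (1 <= dep v <= N)%nat /\
  (forall m, Nat.iter m par v = N -> (dep v <= m)%nat).
Proof.
  intros Hv. destruct Hst as [H1 H2]. destruct (H2 v Hv) as [m Hm].
  assert (HP : Pd v m = true) by (unfold Pd; apply Nat.eqb_eq; auto).
  destruct (findk_spec (Pd v) (S m) 0 m ltac:(lia) HP) as (A & B & C).
  set (m1 := findk (Pd v) 0 (S m)) in *.
  assert (Hmin : forall j, (j < m1)%nat -> Nat.iter j par v <> N).
  { intros j Hj E. specialize (C j ltac:(lia)). unfold Pd in C. apply Nat.eqb_neq in C; auto. }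
  assert (Hm1 : Nat.iter m1 par v = N) by (unfold Pd in A; apply Nat.eqb_eq; auto).
  pose proof (min_le_N v m1 Hv Hm1 Hmin) as Hle.
  assert (HP1 : Pd v m1 = true) by (unfold Pd; apply Nat.eqb_eq; auto).
  destruct (findk_spec (Pd v) (S N) 0 m1 ltac:(lia) HP1) as (A' & B' & C').
  unfold dep. split; [unfold Pd in A'; apply Nat.eqb_eq; auto|]. split.
  - split; [|lia]. destruct (findk (Pd v) 0 (S N)) eqn:E; [|lia].
    unfold Pd in A'; apply Nat.eqb_eq in A'. simpl in A'. lia.
  - intros m' Hm'. destruct (Nat.le_gt_cases (findk (Pd v) 0 (S N)) m'); auto.
    exfalso. specialize (C' m' ltac:(lia)). unfold Pd in C'. apply Nat.eqb_neq in C'; auto.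
Qed.

Lemma dep_N : dep N = 0%nat.
Proof. unfold dep. cbn [findk]. unfold Pd. simpl. rewrite Nat.eqb_refl. auto. Qed.

Lemma dep_par v : (v < N)%nat -> (dep (par v) + 1 <= dep v)%nat.
Proof.
  intros Hv. destruct (dep_spec v Hv) as (A & B & _).
  destruct Hst as [H1 _]. destruct (H1 v Hv) as [Hp1 Hp2].
  destruct (Nat.eq_dec (par v) N) as [E|E].
  - rewrite E, dep_N. lia.
  - destruct (dep_spec (par v) ltac:(lia)) as (_ & _ & C).
    assert (Nat.iter (dep v - 1) par (par v) = N).
    { rewrite <- Nat.iter_succ_r. replace (S (dep v - 1)) with (dep v) by lia. auto. }
    specialize (C _ H). lia.
Qed.

End Depth.

Lemma swap_sum N par (fl G : nat -> R) l : (forall v, In v l -> (par v <= N)%nat) ->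
  sumR l (fun v => fl v * G (par v)) =
  sumR (seq 0 (S N)) (fun w => G w * sumR l (fun v => if Nat.eqb (par v) w then fl v else 0)).
Proof.
  induction l as [|v l IH]; intros H.
  - rewrite sumR_nil. symmetry. apply sumR_zero. intros. rewrite sumR_nil; lra.
  - rewrite sumR_cons, IH by (intros; apply H; simpl; auto). symmetry.
    rewrite (sumR_ext_in _ _ (fun w => (if Nat.eqb w (par v) then G w * fl v else 0) +
       G w * sumR l (fun v0 => if Nat.eqb (par v0) w then fl v0 else 0))).
    + rewrite sumR_plus, sumR_ind.
      assert (par v <= N)%nat by (apply H; simpl; auto).
      replace (Nat.leb 0 (par v)) with true by (symmetry; apply Nat.leb_le; lia).
      replace (Nat.ltb (par v) (0 + S N)) with true by (symmetry; apply Nat.ltb_lt; lia).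
      simpl andb. cbv beta. lra.
    + intros w _. rewrite sumR_cons, Nat.eqb_sym. destruct (Nat.eqb w (par v)); lra.
Qed.

Lemma key_ineq a1 a2 b1 b2 H H' : 1 <= H' -> H' + 1 <= H ->
  ((a1 + b1) ^ 2 + (a2 + b2) ^ 2) / H <= a1 ^ 2 + a2 ^ 2 + (b1 ^ 2 + b2 ^ 2) / H'.
Proof.
  intros h1 h2. unfold Rdiv.
  assert (E1: forall a b, (a + b)^2 * H' <= (H' + 1) * H' * a ^ 2 + (H' + 1) * b ^ 2).
  { intros a b. assert (0 <= (H' * a - b)^2) by apply pow2_ge_0.
    replace ((H' + 1) * H' * a ^ 2 + (H' + 1) * b ^ 2) with ((a + b)^2 * H' + (H' * a - b)^2) by ring. lra. }
  assert (0 < H) by lra. assert (0 < H') by lra.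
  apply (Rmult_le_reg_r (H * H')); [nra|].
  replace (((a1 + b1) ^ 2 + (a2 + b2) ^ 2) * / H * (H * H'))
    with (((a1 + b1) ^ 2 + (a2 + b2) ^ 2) * H') by (field; lra).
  replace ((a1 ^ 2 + a2 ^ 2 + (b1 ^ 2 + b2 ^ 2) * / H') * (H * H'))
    with (H * H' * (a1 ^ 2 + a2 ^ 2) + H * (b1 ^ 2 + b2 ^ 2)) by (field; lra).
  pose proof (E1 a1 b1). pose proof (E1 a2 b2).
  pose proof (pow2_ge_0 a1). pose proof (pow2_ge_0 a2). pose proof (pow2_ge_0 b1). pose proof (pow2_ge_0 b2).
  assert (H * H' * (a1^2 + a2^2) >= (H' + 1) * H' * (a1 ^2 + a2^2)) by nra.
  assert (H * (b1^2 + b2^2) >= (H' + 1) * (b1 ^2 + b2^2)) by nra.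
  nra.
Qed.

Lemma dist2_ge0 p q : 0 <= dist2 p q.
Proof. unfold dist2. pose proof (pow2_ge_0 (fst p - fst q)). pose proof (pow2_ge_0 (snd p - snd q)). lra. Qed.

Lemma dist2_refl p : dist2 p p = 0.
Proof. unfold dist2. ring. Qed.

Lemma L_lower n N par fl (x : nat -> point) :
  is_sink_tree N par -> valid_flow n N par fl -> (n <= N)%nat ->
  / INR (N + 1) * sumR (seq 0 n) (fun i => dist2 (x i) (x N)) <=
  sumR (seq 0 N) (fun v => fl v * dist2 (x v) (x (par v))).
Proof.
  intros Hst [Hf1 Hf2] HnN.
  set (Phi := fun w => dist2 (x w) (x N) / INR (dep N par w)).
  assert (PhiN : Phi N = 0) by (unfold Phi; rewrite dist2_refl; unfold Rdiv; ring).
  assert (S1 : forall v, (v < N)%nat -> Phi v - Phi (par v) <= dist2 (x v) (x (par v))).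
  { intros v Hv. destruct (dep_spec N par Hst v Hv) as (_ & Hd & _).
    pose proof (dep_par N par Hst v Hv) as Hdp.
    pose proof Hst as [H1 _]. destruct (H1 v Hv) as [Hp1 Hp2].
    destruct (Nat.eq_dec (par v) N) as [E|E].
    - rewrite E, PhiN. unfold Phi.
      assert (1 <= INR (dep N par v)) by (apply (le_INR 1); lia).
      pose proof (dist2_ge0 (x v) (x N)).
      apply Rle_trans with (dist2 (x v) (x N)); [|lra].
      unfold Rdiv. rewrite <- (Rmult_1_r (dist2 (x v) (x N))) at 2.
      assert (0 < / INR (dep N par v) <= 1).
      { split. apply Rinv_0_lt_compat; lra. rewrite <- Rinv_1. apply Rinv_le_contravar; lra. }
      nra.
    - destruct (dep_spec N par Hst (par v) ltac:(lia)) as (_ & Hd' & _).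
      unfold Phi. unfold dist2.
      pose proof (key_ineq (fst (x v) - fst (x (par v))) (snd (x v) - snd (x (par v)))
        (fst (x (par v)) - fst (x N)) (snd (x (par v)) - snd (x N))
        (INR (dep N par v)) (INR (dep N par (par v)))
        ltac:(apply (le_INR 1); lia) ltac:(rewrite <- S_INR; apply le_INR; lia)).
      replace (fst (x v) - fst (x (par v)) + (fst (x (par v)) - fst (x N))) with
        (fst (x v) - fst (x N)) in H by ring.
      replace (snd (x v) - snd (x (par v)) + (snd (x (par v)) - snd (x N))) with
        (snd (x v) - snd (x N)) in H by ring.
      lra. }
  assert (S2 : sumR (seq 0 N) (fun v => fl v * Phi v - fl v * Phi (par v)) <=
               sumR (seq 0 N) (fun v => fl v * dist2 (x v) (x (par v)))).
  { apply sumR_le_in. intros v Hv. apply in_seq in Hv. destruct (Hf1 v ltac:(lia)) as [Hpos _].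
    specialize (S1 v ltac:(lia)). nra. }
  assert (S3 : sumR (seq 0 N) (fun v => fl v * Phi (par v)) =
     sumR (seq 0 (S N)) (fun w => Phi w * inflow N par fl w)).
  { rewrite (swap_sum N par fl Phi).
    - apply sumR_ext_in. intros w _. unfold inflow. rewrite sumR_filter. auto.
    - intros v Hv. apply in_seq in Hv. pose proof Hst as [H1 _]. apply (H1 v). lia. }
  rewrite seq_S, sumR_app, sumR_cons, sumR_nil in S3. cbn [plus] in S3.
  rewrite PhiN in S3.
  assert (S5 : sumR (seq 0 N) (fun v => fl v * Phi v - fl v * Phi (par v)) =
               sumR (seq 0 N) (fun w => if Nat.ltb w n then Phi w else 0)).
  { replace (sumR (seq 0 N) (fun v => fl v * Phi v - fl v * Phi (par v))) with
      (sumR (seq 0 N) (fun v => fl v * Phi v + (-1) * (fl v * Phi (par v)))) by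
      (apply sumR_ext_in; intros; ring).
    rewrite sumR_plus, sumR_scal, S3.
    replace (sumR (seq 0 N) (fun v => fl v * Phi v) + -1 * (sumR (seq 0 N)
       (fun w => Phi w * inflow N par fl w) + (0 * inflow N par fl N + 0))) with
      (sumR (seq 0 N) (fun v => fl v * Phi v) + -1 * sumR (seq 0 N)
       (fun w => Phi w * inflow N par fl w)) by ring.
    rewrite <- sumR_scal, <- sumR_plus. apply sumR_ext_in. intros w Hw.
    apply in_seq in Hw. destruct (Hf1 w ltac:(lia)) as [_ E].
    destruct (Nat.ltb w n); nra. }
  replace N with (n + (N - n))%nat in S5 at 2 by lia.
  rewrite seq_app, sumR_app in S5.
  rewrite (sumR_zero (seq (0 + n) (N - n))) in S5.
  2:{ intros w Hw. apply in_seq in Hw. replace (Nat.ltb w n) with false by (symmetry; apply Nat.ltb_ge; lia). auto. }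
  rewrite (sumR_ext_in (seq 0 n) _ Phi) in S5.
  2:{ intros w Hw. apply in_seq in Hw. replace (Nat.ltb w n) with true by (symmetry; apply Nat.ltb_lt; lia). auto. }
  eapply Rle_trans; [|apply S2]. rewrite S5, Rplus_0_r.
  rewrite <- sumR_scal. apply sumR_le_in. intros i Hi. apply in_seq in Hi.
  unfold Phi. destruct (dep_spec N par Hst i ltac:(lia)) as (_ & Hd & _).
  pose proof (dist2_ge0 (x i) (x N)).
  assert (1 <= INR (dep N par i)) by (apply (le_INR 1); lia).
  assert (INR (dep N par i) <= INR (N + 1)) by (apply le_INR; lia).
  unfold Rdiv. rewrite Rmult_comm. apply Rmult_le_compat_l; auto.
  apply Rinv_le_contravar; lra.
Qed.


Lemma length_filter_lt (P : nat -> bool) v k :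
  (forall u, (u < k)%nat -> P u = Nat.ltb u v) -> length (filter P (seq 0 k)) = Nat.min v k.
Proof.
  induction k; intros H; [simpl; lia|].
  rewrite seq_S, filter_app, length_app, IHk by (intros; apply H; lia). simpl.
  rewrite H by lia. destruct (Nat.ltb k v) eqn:E; simpl.
  - apply Nat.ltb_lt in E; lia.
  - apply Nat.ltb_ge in E; lia.
Qed.

Section BST.
Variables (n : nat) (z : nat -> point) (zBS : point) (p : nat -> nat) (f : nat -> R) (m : nat -> nat).
Hypothesis Hp : is_sink_tree n p.
Hypothesis Hf : valid_flow n n p f.

Definition K := off m n.
Definition NN := (n + K)%nat.
Definition blk (s : nat) : nat := length (filter (fun u => Nat.leb (off m (S u)) s) (seq 0 n)).
Definition emb (x : nat) : nat := if Nat.ltb x n then x else NN.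
Definition Pv (v : nat) : nat := emb (p v).
Definition par' (u : nat) : nat :=
  if Nat.ltb u n then (if Nat.eqb (m u) 0 then Pv u else (n + off m u)%nat)
  else if Nat.ltb (S (u - n)) (off m (S (blk (u - n)))) then S u else Pv (blk (u - n)).
Definition fl' (u : nat) : R := if Nat.ltb u n then f u else f (blk (u - n)).

Lemma off_le_K v : (v < n)%nat -> (off m v + m v <= K)%nat.
Proof. intros H. unfold K. change (off m v + m v)%nat with (off m (S v)). apply off_mono; lia. Qed.

Lemma blk_spec v j : (v < n)%nat -> (j < m v)%nat -> blk (off m v + j) = v.
Proof.
  intros Hv Hj. unfold blk. rewrite (length_filter_lt _ v); [lia|].
  intros u Hu. destruct (Nat.ltb u v) eqn:E.
  - apply Nat.ltb_lt in E. apply Nat.leb_le. assert (off m (S u) <= off m v)%nat by (apply off_mono; lia). lia.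
  - apply Nat.ltb_ge in E. apply Nat.leb_gt. assert (off m (S v) <= off m (S u))%nat by (apply off_mono; lia).
    simpl in *. lia.
Qed.

Lemma par_bead v j : (v < n)%nat -> (j < m v)%nat ->
  par' (n + off m v + j) = if Nat.ltb (S j) (m v) then (n + off m v + S j)%nat else Pv v.
Proof.
  intros Hv Hj. unfold par'.
  replace (Nat.ltb (n + off m v + j) n) with false by (symmetry; apply Nat.ltb_ge; lia).
  replace (n + off m v + j - n)%nat with (off m v + j)%nat by lia.
  rewrite blk_spec by auto. cbn [off].
  destruct (Nat.ltb (S j) (m v)) eqn:E; [apply Nat.ltb_lt in E | apply Nat.ltb_ge in E].
  - replace (Nat.ltb (S (off m v + j)) (off m v + m v)) with true by (symmetry; apply Nat.ltb_lt; lia). lia.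
  - replace (Nat.ltb (S (off m v + j)) (off m v + m v)) with false by (symmetry; apply Nat.ltb_ge; lia). auto.
Qed.

Lemma fl_bead v j : (v < n)%nat -> (j < m v)%nat -> fl' (n + off m v + j) = f v.
Proof.
  intros Hv Hj. unfold fl'.
  replace (Nat.ltb (n + off m v + j) n) with false by (symmetry; apply Nat.ltb_ge; lia).
  replace (n + off m v + j - n)%nat with (off m v + j)%nat by lia. rewrite blk_spec; auto.
Qed.

Lemma par_src v : (v < n)%nat -> par' v = if Nat.eqb (m v) 0 then Pv v else (n + off m v)%nat.
Proof. intros Hv. unfold par'. replace (Nat.ltb v n) with true by (symmetry; apply Nat.ltb_lt; lia). auto. Qed.

Lemma fl_src v : (v < n)%nat -> fl' v = f v.
Proof. intros Hv. unfold fl'. replace (Nat.ltb v n) with true by (symmetry; apply Nat.ltb_lt; lia). auto. Qed.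

Lemma p_le v : (v < n)%nat -> (p v <= n)%nat /\ p v <> v.
Proof. destruct Hp as [H _]. apply H. Qed.

Lemma emb_cases x : (x <= n)%nat -> (emb x = x /\ x < n)%nat \/ (emb x = NN /\ x = n).
Proof. intros H. unfold emb. destruct (Nat.ltb x n) eqn:E; [apply Nat.ltb_lt in E | apply Nat.ltb_ge in E].
  left; auto. right; split; auto; lia. Qed.

Lemma emb_inj a b : (a <= n)%nat -> (b <= n)%nat -> emb a = emb b -> a = b.
Proof. intros Ha Hb E. destruct (emb_cases a Ha) as [[A1 A2]|[A1 A2]];
  destruct (emb_cases b Hb) as [[B1 B2]|[B1 B2]]; unfold NN in *; lia. Qed.

Lemma Pv_term v : (v < n)%nat -> (Pv v < n)%nat \/ Pv v = NN.
Proof. intros Hv. unfold Pv. destruct (p_le v Hv). destruct (emb_cases (p v)) as [[A B]|[A B]]; auto; lia. Qed.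

Lemma chain_iter v : (v < n)%nat -> forall k j, (j < m v)%nat -> (m v - j = S k)%nat ->
  Nat.iter (S k) par' (n + off m v + j)%nat = Pv v.
Proof.
  intros Hv. induction k; intros j Hj Hk.
  - simpl. rewrite par_bead by auto. replace (Nat.ltb (S j) (m v)) with false by (symmetry; apply Nat.ltb_ge; lia). auto.
  - rewrite Nat.iter_succ_r, par_bead by auto.
    replace (Nat.ltb (S j) (m v)) with true by (symmetry; apply Nat.ltb_lt; lia).
    apply IHk; lia.
Qed.

Lemma src_iter v : (v < n)%nat -> Nat.iter (S (m v)) par' v = Pv v.
Proof.
  intros Hv. rewrite Nat.iter_succ_r, par_src by auto.
  destruct (Nat.eqb (m v) 0) eqn:E; [apply Nat.eqb_eq in E; rewrite E; auto|].
  apply Nat.eqb_neq in E. destruct (m v) as [|k] eqn:Em; [lia|].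
  replace (n + off m v)%nat with (n + off m v + 0)%nat by lia. apply chain_iter; lia.
Qed.

Lemma term_reach_aux M : forall x, (x <= n)%nat -> Nat.iter M p x = n ->
  exists k, Nat.iter k par' (emb x) = NN.
Proof.
  induction M; intros x Hx HM.
  - simpl in HM. subst. exists 0%nat. simpl. unfold emb. rewrite Nat.ltb_irrefl. auto.
  - destruct (Nat.eq_dec x n) as [E|E].
    + subst. exists 0%nat. simpl. unfold emb. rewrite Nat.ltb_irrefl. auto.
    + rewrite Nat.iter_succ_r in HM. destruct (p_le x ltac:(lia)) as [H1 H2].
      destruct (IHM (p x) H1 HM) as [k Hk]. exists (k + S (m x))%nat.
      rewrite Nat.iter_add. unfold emb at 1. replace (Nat.ltb x n) with true by (symmetry; apply Nat.ltb_lt; lia).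
      rewrite src_iter by lia. auto.
Qed.

Lemma term_reach x : (x <= n)%nat -> exists k, Nat.iter k par' (emb x) = NN.
Proof.
  intros Hx. destruct (Nat.eq_dec x n) as [E|E].
  - subst. exists 0%nat. simpl. unfold emb. rewrite Nat.ltb_irrefl. auto.
  - destruct Hp as [_ H2]. destruct (H2 x ltac:(lia)) as [M HM]. apply (term_reach_aux M); auto.
Qed.

Lemma sink_tree' : is_sink_tree NN par'.
Proof.
  split.
  - intros u Hu. destruct (Nat.lt_ge_cases u n) as [L|L].
    + rewrite par_src by auto. destruct (Nat.eqb (m u) 0) eqn:E.
      * destruct (Pv_term u L) as [A|A]; [|unfold NN in *; lia].
        split; [unfold NN; lia|]. unfold Pv in *. destruct (p_le u L).
        destruct (emb_cases (p u)) as [[B C]|[B C]]; lia.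
      * apply Nat.eqb_neq in E. pose proof (off_le_K u L). unfold NN; lia.
    + destruct (off_decomp m n (u - n)) as (v & j & Hv & Hj & Hs); [unfold NN, K in *; lia|].
      replace u with (n + off m v + j)%nat by lia. rewrite par_bead by auto.
      pose proof (off_le_K v Hv).
      destruct (Nat.ltb (S j) (m v)) eqn:E; [apply Nat.ltb_lt in E | apply Nat.ltb_ge in E].
      * unfold NN; lia.
      * destruct (Pv_term v Hv) as [A|A]; unfold NN in *; lia.
  - intros u Hu. destruct (Nat.lt_ge_cases u n) as [L|L].
    + destruct (p_le u L) as [H1 _]. destruct (term_reach (p u) H1) as [k Hk].
      exists (k + S (m u))%nat. rewrite Nat.iter_add, src_iter by auto. auto.
    + destruct (off_decomp m n (u - n)) as (v & j & Hv & Hj & Hs); [unfold NN, K in *; lia|].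
      replace u with (n + off m v + j)%nat by lia.
      destruct (p_le v Hv) as [H1 _]. destruct (term_reach (p v) H1) as [k Hk].
      exists (k + S (m v - j - 1))%nat. rewrite Nat.iter_add, chain_iter by (auto; lia). auto.
Qed.


Lemma chain_decomp F : sumR (seq 0 NN) F =
  sumR (seq 0 n) (fun v => F v + sumR (seq (n + off m v) (m v)) F).
Proof.
  unfold NN. rewrite seq_app, sumR_app. cbn [plus]. unfold K. rewrite sumR_blocks.
  rewrite sumR_plus. auto.
Qed.

Lemma bead_form v u : In u (seq (n + off m v) (m v)) ->
  u = (n + off m v + (u - n - off m v))%nat /\ (u - n - off m v < m v)%nat.
Proof. intros H. apply in_seq in H. lia. Qed.

Definition Fw (w u : nat) : R := if Nat.eqb (par' u) w then fl' u else 0.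

Lemma CS_term w v : ((w < n)%nat \/ w = NN) -> (v < n)%nat ->
  Fw w v + sumR (seq (n + off m v) (m v)) (Fw w) = if Nat.eqb (Pv v) w then f v else 0.
Proof.
  intros Hw Hv. pose proof (off_le_K v Hv). unfold Fw at 1. rewrite par_src, fl_src by auto.
  destruct (Nat.eqb (m v) 0) eqn:E.
  - apply Nat.eqb_eq in E. rewrite E. simpl seq. rewrite sumR_nil. lra.
  - apply Nat.eqb_neq in E.
    replace (Nat.eqb (n + off m v) w) with false by (symmetry; apply Nat.eqb_neq; unfold NN in *; lia).
    rewrite (sumR_ext_in _ _ (fun u => if Nat.eqb u (n + off m v + (m v - 1)) then
       (if Nat.eqb (Pv v) w then f v else 0) else 0)).
    + rewrite sumR_ind.
      replace (Nat.leb (n + off m v) (n + off m v + (m v - 1))) with true by (symmetry; apply Nat.leb_le; lia).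
      replace (Nat.ltb (n + off m v + (m v - 1)) (n + off m v + m v)) with true by (symmetry; apply Nat.ltb_lt; lia).
      simpl. lra.
    + intros u Hu. destruct (bead_form v u Hu) as [Eu Hj].
      set (j := (u - n - off m v)%nat) in *. rewrite Eu. unfold Fw.
      rewrite par_bead, fl_bead by auto.
      destruct (Nat.ltb (S j) (m v)) eqn:E2; [apply Nat.ltb_lt in E2 | apply Nat.ltb_ge in E2].
      * replace (Nat.eqb (n + off m v + S j) w) with false by (symmetry; apply Nat.eqb_neq; unfold NN in *; lia).
        replace (Nat.eqb (n + off m v + j) (n + off m v + (m v - 1))) with false by (symmetry; apply Nat.eqb_neq; lia).
        auto.
      * replace (Nat.eqb (n + off m v + j) (n + off m v + (m v - 1))) with true by (symmetry; apply Nat.eqb_eq; lia).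
        auto.
Qed.

Lemma CS_stein v0 j0 v : (v0 < n)%nat -> (j0 < m v0)%nat -> (v < n)%nat ->
  Fw (n + off m v0 + j0) v + sumR (seq (n + off m v) (m v)) (Fw (n + off m v0 + j0)) =
  if Nat.eqb v v0 then f v0 else 0.
Proof.
  intros Hv0 Hj0 Hv. pose proof (off_le_K v Hv). pose proof (off_le_K v0 Hv0).
  set (w := (n + off m v0 + j0)%nat).
  assert (Pw : Pv v <> w) by (destruct (Pv_term v Hv); unfold w, NN in *; lia).
  destruct (Nat.eqb v v0) eqn:Ev; [apply Nat.eqb_eq in Ev; subst v | apply Nat.eqb_neq in Ev].
  - unfold Fw at 1. rewrite par_src, fl_src by auto.
    destruct j0 as [|j1].
    + assert (m v0 <> 0)%nat by lia. replace (Nat.eqb (m v0) 0) with false by (symmetry; apply Nat.eqb_neq; lia).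
      replace (Nat.eqb (n + off m v0) w) with true by (symmetry; apply Nat.eqb_eq; unfold w; lia).
      rewrite sumR_zero; [lra|]. intros u Hu. destruct (bead_form v0 u Hu) as [Eu Hj].
      set (j := (u - n - off m v0)%nat) in *. rewrite Eu. unfold Fw.
      rewrite par_bead by auto.
      destruct (Nat.ltb (S j) (m v0)); [|replace (Nat.eqb (Pv v0) w) with false by (symmetry; apply Nat.eqb_neq; auto); auto].
      replace (Nat.eqb (n + off m v0 + S j) w) with false by (symmetry; apply Nat.eqb_neq; unfold w; lia). auto.
    + replace (Nat.eqb (if Nat.eqb (m v0) 0 then Pv v0 else (n + off m v0)%nat) w) with false.
      2:{ symmetry. destruct (Nat.eqb (m v0) 0); apply Nat.eqb_neq; auto. unfold w; lia. }
      rewrite (sumR_ext_in _ _ (fun u => if Nat.eqb u (n + off m v0 + j1) then f v0 else 0)).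
      * rewrite sumR_ind.
        replace (Nat.leb (n + off m v0) (n + off m v0 + j1)) with true by (symmetry; apply Nat.leb_le; lia).
        replace (Nat.ltb (n + off m v0 + j1) (n + off m v0 + m v0)) with true by (symmetry; apply Nat.ltb_lt; lia).
        simpl. lra.
      * intros u Hu. destruct (bead_form v0 u Hu) as [Eu Hj].
        set (j := (u - n - off m v0)%nat) in *. rewrite Eu. unfold Fw.
        rewrite par_bead, fl_bead by auto.
        destruct (Nat.ltb (S j) (m v0)) eqn:E2; [apply Nat.ltb_lt in E2 | apply Nat.ltb_ge in E2].
        -- destruct (Nat.eq_dec j j1) as [Ej|Ej].
           ++ subst j1. rewrite !Nat.eqb_refl. unfold w. replace (S j) with (S j) by lia.
              replace (Nat.eqb (n + off m v0 + S j) (n + off m v0 + S j)) with true by (symmetry; apply Nat.eqb_refl). auto.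
           ++ replace (Nat.eqb (n + off m v0 + S j) w) with false by (symmetry; apply Nat.eqb_neq; unfold w; lia).
              replace (Nat.eqb (n + off m v0 + j) (n + off m v0 + j1)) with false by (symmetry; apply Nat.eqb_neq; lia). auto.
        -- replace (Nat.eqb (Pv v0) w) with false by (symmetry; apply Nat.eqb_neq; auto).
           replace (Nat.eqb (n + off m v0 + j) (n + off m v0 + j1)) with false by (symmetry; apply Nat.eqb_neq; lia). auto.
  - unfold Fw at 1. rewrite par_src, fl_src by auto.
    replace (Nat.eqb (if Nat.eqb (m v) 0 then Pv v else (n + off m v)%nat) w) with false.
    2:{ symmetry. destruct (Nat.eqb (m v) 0) eqn:E; apply Nat.eqb_neq; auto.
        apply Nat.eqb_neq in E. intro C. unfold w in C.
        destruct (off_disj m v v0 0 j0 ltac:(lia) Hj0 ltac:(lia)). lia. }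
    rewrite sumR_zero; [lra|]. intros u Hu. destruct (bead_form v u Hu) as [Eu Hj].
    set (j := (u - n - off m v)%nat) in *. rewrite Eu. unfold Fw.
    rewrite par_bead by auto.
    destruct (Nat.ltb (S j) (m v)) eqn:E2; [apply Nat.ltb_lt in E2|].
    + replace (Nat.eqb (n + off m v + S j) w) with false; auto.
      symmetry; apply Nat.eqb_neq. intro C. unfold w in C.
      destruct (off_disj m v v0 (S j) j0 E2 Hj0 ltac:(lia)). lia.
    + replace (Nat.eqb (Pv v) w) with false by (symmetry; apply Nat.eqb_neq; auto). auto.
Qed.

Lemma inflow'_eq w : inflow NN par' fl' w = sumR (seq 0 n) (fun v => Fw w v + sumR (seq (n + off m v) (m v)) (Fw w)).
Proof. unfold inflow. rewrite sumR_filter. apply chain_decomp. Qed.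

Lemma inflow'_term x : (x <= n)%nat -> inflow NN par' fl' (emb x) = inflow n p f x.
Proof.
  intros Hx. rewrite inflow'_eq. unfold inflow. rewrite sumR_filter.
  apply sumR_ext_in. intros v Hv. apply in_seq in Hv. rewrite CS_term by
    (destruct (emb_cases x Hx) as [[A B]|[A B]]; lia || (right; auto) || (left; lia)).
  unfold Pv. destruct (p_le v ltac:(lia)).
  destruct (Nat.eqb (emb (p v)) (emb x)) eqn:E; [apply Nat.eqb_eq in E | apply Nat.eqb_neq in E].
  - apply emb_inj in E; auto. rewrite E, Nat.eqb_refl. auto.
  - replace (Nat.eqb (p v) x) with false; auto. symmetry; apply Nat.eqb_neq. intro C; subst; auto.
Qed.

Lemma flow' : valid_flow n NN par' fl'.
Proof.
  destruct Hf as [Hf1 Hf2]. split.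
  - intros u Hu. destruct (Nat.lt_ge_cases u n) as [L|L].
    + rewrite fl_src by auto. destruct (Hf1 u L) as [P1 P2]. split; auto.
      assert (Eu : emb u = u) by (unfold emb; replace (Nat.ltb u n) with true by (symmetry; apply Nat.ltb_lt; lia); auto).
      pose proof (inflow'_term u ltac:(lia)) as Hi. rewrite Eu in Hi. rewrite Hi. auto.
    + destruct (off_decomp m n (u - n)) as (v & j & Hv & Hj & Hs); [unfold NN, K in *; lia|].
      replace u with (n + off m v + j)%nat by lia. rewrite fl_bead by auto.
      destruct (Hf1 v Hv) as [P1 _]. split; auto.
      rewrite inflow'_eq. rewrite (sumR_ext_in _ _ (fun v' => if Nat.eqb v' v then f v else 0)).
      * rewrite sumR_ind. replace (Nat.leb 0 v) with true by (symmetry; apply Nat.leb_le; lia).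
        replace (Nat.ltb v (0 + n)) with true by (symmetry; apply Nat.ltb_lt; lia).
        replace (Nat.ltb (n + off m v + j) n) with false by (symmetry; apply Nat.ltb_ge; lia). simpl. lra.
      * intros v' Hv'. apply in_seq in Hv'. apply CS_stein; auto; lia.
  - assert (Eu : emb n = NN) by (unfold emb; rewrite Nat.ltb_irrefl; auto).
    pose proof (inflow'_term n ltac:(lia)) as Hi. rewrite Eu in Hi. rewrite Hi. auto.
Qed.


Definition interp (A B : point) (t : R) : point :=
  (fst A + t * (fst B - fst A), snd A + t * (snd B - snd A)).

Lemma dist2_interp A B t1 t2 : dist2 (interp A B t1) (interp A B t2) = (t1 - t2) ^ 2 * dist2 A B.
Proof. unfold dist2, interp; simpl. ring. Qed.
Lemma dist2_interp0 A B t : dist2 A (interp A B t) = t ^ 2 * dist2 A B.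
Proof. unfold dist2, interp; simpl. ring. Qed.
Lemma dist2_interp1 A B t : dist2 (interp A B t) B = (1 - t) ^ 2 * dist2 A B.
Proof. unfold dist2, interp; simpl. ring. Qed.

Definition Bv (v : nat) : point := tpos n z zBS (p v).
Definition bpos (v j : nat) : point := interp (z v) (Bv v) (INR (S j) / INR (S (m v))).
Definition qs (s : nat) : point := bpos (blk s) (s - off m (blk s)).
Definition fsp (e : R) (s : nat) : point := (fst (qs s) + e * INR (S s), snd (qs s)).
Definition Tb (e : R) : fqst := mkFQST K (fsp e) par' fl'.
Definition q (u : nat) : point := if Nat.ltb u n then z u else if Nat.ltb u NN then qs (u - n) else zBS.
Definition g (u : nat) : R := if Nat.ltb u n then 0 else if Nat.ltb u NN then INR (S (u - n)) else 0.

Lemma fpos_fst e u : fst (fpos n z zBS (Tb e) u) = fst (q u) + e * g u.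
Proof. unfold fpos, q, g, Tb, fsp, NN; simpl fk. destruct (Nat.ltb u n); [ring|].
  destruct (Nat.ltb u (n + K)); simpl; ring. Qed.
Lemma fpos_snd e u : snd (fpos n z zBS (Tb e) u) = snd (q u).
Proof. unfold fpos, q, g, Tb, fsp, NN; simpl fk. destruct (Nat.ltb u n); auto.
  destruct (Nat.ltb u (n + K)); simpl; auto. Qed.

Lemma q_src v : (v < n)%nat -> q v = z v.
Proof. intros. unfold q. replace (Nat.ltb v n) with true by (symmetry; apply Nat.ltb_lt; lia). auto. Qed.

Lemma q_bead v j : (v < n)%nat -> (j < m v)%nat -> q (n + off m v + j) = bpos v j.
Proof. intros Hv Hj. pose proof (off_le_K v Hv). unfold q.
  replace (Nat.ltb (n + off m v + j) n) with false by (symmetry; apply Nat.ltb_ge; lia).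
  replace (Nat.ltb (n + off m v + j) NN) with true by (symmetry; apply Nat.ltb_lt; unfold NN; lia).
  unfold qs. replace (n + off m v + j - n)%nat with (off m v + j)%nat by lia.
  rewrite blk_spec by auto. f_equal. lia. Qed.

Lemma q_emb x : (x <= n)%nat -> q (emb x) = tpos n z zBS x.
Proof. intros Hx. destruct (emb_cases x Hx) as [[A B]|[A B]]; rewrite A.
  - rewrite q_src by auto. unfold tpos. replace (Nat.ltb x n) with true by (symmetry; apply Nat.ltb_lt; lia). auto.
  - subst. unfold q, tpos. rewrite Nat.ltb_irrefl. unfold NN.
    replace (Nat.ltb (n + K) n) with false by (symmetry; apply Nat.ltb_ge; lia).
    rewrite Nat.ltb_irrefl. auto. Qed.

Lemma cost0 : sumR (seq 0 NN) (fun u => fl' u * dist2 (q u) (q (par' u))) =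
  sumR (seq 0 n) (fun v => f v * dist2 (z v) (Bv v) / INR (S (m v))).
Proof.
  rewrite chain_decomp. apply sumR_ext_in. intros v Hv. apply in_seq in Hv.
  assert (Hv' : (v < n)%nat) by lia. destruct (p_le v Hv') as [Hpv _].
  set (D := dist2 (z v) (Bv v)).
  assert (HM : 0 < INR (S (m v))) by (apply lt_0_INR; lia).
  rewrite fl_src, par_src, q_src by auto.
  destruct (Nat.eqb (m v) 0) eqn:E.
  - apply Nat.eqb_eq in E. rewrite E. simpl seq. rewrite sumR_nil.
    unfold Pv. rewrite q_emb by auto. fold (Bv v). fold D. simpl INR. field.
  - apply Nat.eqb_neq in E.
    assert (Q0 : q (n + off m v) = bpos v 0) by (rewrite <- (q_bead v 0) by lia; f_equal; lia).
    rewrite Q0. unfold bpos. rewrite dist2_interp0.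
    rewrite (sumR_ext_in _ _ (fun _ => f v * (D / INR (S (m v)) ^ 2))).
    + rewrite sumR_const, length_seq. rewrite !S_INR. rewrite S_INR in HM. unfold D. simpl INR. field. lra.
    + intros u Hu. destruct (bead_form v u Hu) as [Eu Hj].
      set (j := (u - n - off m v)%nat) in *. rewrite Eu.
      rewrite fl_bead, par_bead, q_bead by auto.
      destruct (Nat.ltb (S j) (m v)) eqn:E2; [apply Nat.ltb_lt in E2 | apply Nat.ltb_ge in E2].
      * rewrite q_bead by auto. unfold bpos. rewrite dist2_interp. fold D.
        rewrite !S_INR. rewrite S_INR in HM. field. lra.
      * unfold Pv. rewrite q_emb by auto. fold (Bv v). unfold bpos. rewrite dist2_interp1. fold D.
        assert (INR (S j) = INR (m v)) by (f_equal; lia). rewrite H.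
        rewrite !S_INR. rewrite S_INR in HM. field. lra.
Qed.

Lemma pert_ineq a b d e : 0 < e <= 1 ->
  (a + e * d) ^ 2 + b ^ 2 <= a ^ 2 + b ^ 2 + e * (2 * Rabs a * Rabs d + d ^ 2).
Proof.
  intros He. assert (a * d <= Rabs a * Rabs d) by (rewrite <- Rabs_mult; apply Rle_abs).
  assert (0 <= d ^ 2) by apply pow2_ge_0.
  assert (e * e * d ^ 2 <= e * d ^ 2) by (apply Rmult_le_compat_r; nra).
  nra.
Qed.

Definition Cc : R := sumR (seq 0 NN) (fun u => fl' u *
  (2 * Rabs (fst (q u) - fst (q (par' u))) * Rabs (g u - g (par' u)) + (g u - g (par' u)) ^ 2)).

Lemma fl'_pos u : (u < NN)%nat -> 0 < fl' u.
Proof. intros. destruct flow' as [H1 _]. apply H1; auto. Qed.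

Lemma Cc_ge0 : 0 <= Cc.
Proof. unfold Cc. apply sumR_nonneg. intros u Hu. apply in_seq in Hu.
  pose proof (fl'_pos u ltac:(lia)). pose proof (Rabs_pos (fst (q u) - fst (q (par' u)))).
  pose proof (Rabs_pos (g u - g (par' u))). pose proof (pow2_ge_0 (g u - g (par' u))).
  apply Rmult_le_pos; [lra|]. apply Rplus_le_le_0_compat; auto.
  apply Rmult_le_pos; auto. apply Rmult_le_pos; lra. Qed.

Lemma L_Tb e : 0 < e <= 1 ->
  L n z zBS (Tb e) <= sumR (seq 0 n) (fun v => f v * dist2 (z v) (Bv v) / INR (S (m v))) + e * Cc.
Proof.
  intros He. rewrite <- cost0. unfold Cc. rewrite <- sumR_scal, <- sumR_plus.
  unfold L. simpl fk. fold NN. apply sumR_le_in. intros u Hu. apply in_seq in Hu.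
  pose proof (fl'_pos u ltac:(lia)). simpl fflow. simpl fpar.
  unfold dist2 at 1. rewrite !fpos_fst, !fpos_snd.
  replace (fst (q u) + e * g u - (fst (q (par' u)) + e * g (par' u))) with
    ((fst (q u) - fst (q (par' u))) + e * (g u - g (par' u))) by ring.
  pose proof (pert_ineq (fst (q u) - fst (q (par' u))) (snd (q u) - snd (q (par' u))) (g u - g (par' u)) e He).
  unfold dist2. nra.
Qed.

Lemma min_pos_1 (h : nat -> R) N : exists d, 0 < d /\ forall u, (u <= N)%nat -> h u <> 0 -> d <= Rabs (h u).
Proof.
  induction N.
  - destruct (Req_dec (h 0%nat) 0) as [E|E].
    + exists 1; split; [lra|]. intros u Hu C. replace u with 0%nat in C by lia. tauto.
    + exists (Rabs (h 0%nat)). split; [apply Rabs_pos_lt; auto|]. intros u Hu C. replace u with 0%nat by lia. lra.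
  - destruct IHN as [d [Hd H]].
    destruct (Req_dec (h (S N)) 0) as [E|E].
    + exists d; split; auto. intros u Hu C. destruct (Nat.eq_dec u (S N)); [subst; tauto|]. apply H; auto; lia.
    + exists (Rmin d (Rabs (h (S N)))). split; [apply Rmin_pos; auto; apply Rabs_pos_lt; auto|].
      intros u Hu C. destruct (Nat.eq_dec u (S N)) as [->|ne]; [apply Rmin_r|].
      eapply Rle_trans; [apply Rmin_l|]. apply H; auto; lia.
Qed.

Lemma min_pos_2 (h : nat -> nat -> R) N : exists d, 0 < d /\
  forall u v, (u <= N)%nat -> (v <= N)%nat -> h u v <> 0 -> d <= Rabs (h u v).
Proof.
  assert (forall M, exists d, 0 < d /\ forall u v, (u <= M)%nat -> (v <= N)%nat -> h u v <> 0 -> d <= Rabs (h u v)).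
  2: apply H.
  induction M.
  - destruct (min_pos_1 (h 0%nat) N) as [d [Hd H]]. exists d; split; auto.
    intros u v Hu Hv C. replace u with 0%nat in * by lia. auto.
  - destruct IHM as [d [Hd H]]. destruct (min_pos_1 (h (S M)) N) as [d' [Hd' H']].
    exists (Rmin d d'). split; [apply Rmin_pos; auto|].
    intros u v Hu Hv C. destruct (Nat.eq_dec u (S M)) as [->|ne].
    + eapply Rle_trans; [apply Rmin_r|]. auto.
    + eapply Rle_trans; [apply Rmin_l|]. apply H; auto; lia.
Qed.

Hypothesis hz : forall i j, (i < n)%nat -> (j < n)%nat -> z i = z j -> i = j.
Hypothesis hBS : forall i, (i < n)%nat -> z i <> zBS.

Lemma g_bound u : (0 <= g u <= INR NN).
Proof. unfold g. destruct (Nat.ltb u n); [pose proof (pos_INR NN); lra|].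
  destruct (Nat.ltb u NN) eqn:E; [|pose proof (pos_INR NN); lra].
  apply Nat.ltb_lt in E. split; [apply pos_INR|apply le_INR]. lia. Qed.

Lemma q_or_g u v : (u <= NN)%nat -> (v <= NN)%nat -> u <> v -> q u <> q v \/ g u <> g v.
Proof.
  intros Hu Hv Huv.
  assert (Tu : ((u < n)%nat \/ u = NN) -> g u = 0).
  { intros [A|A]; unfold g. replace (Nat.ltb u n) with true by (symmetry; apply Nat.ltb_lt; lia); auto.
    subst. rewrite Nat.ltb_irrefl. unfold NN. replace (Nat.ltb (n + K) n) with false by (symmetry; apply Nat.ltb_ge; lia). auto. }
  assert (Tv : ((v < n)%nat \/ v = NN) -> g v = 0).
  { intros [A|A]; unfold g. replace (Nat.ltb v n) with true by (symmetry; apply Nat.ltb_lt; lia); auto.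
    subst. rewrite Nat.ltb_irrefl. unfold NN. replace (Nat.ltb (n + K) n) with false by (symmetry; apply Nat.ltb_ge; lia). auto. }
  assert (Su : (n <= u < NN)%nat -> g u = INR (S (u - n))).
  { intros A. unfold g. replace (Nat.ltb u n) with false by (symmetry; apply Nat.ltb_ge; lia).
    replace (Nat.ltb u NN) with true by (symmetry; apply Nat.ltb_lt; lia). auto. }
  assert (Sv : (n <= v < NN)%nat -> g v = INR (S (v - n))).
  { intros A. unfold g. replace (Nat.ltb v n) with false by (symmetry; apply Nat.ltb_ge; lia).
    replace (Nat.ltb v NN) with true by (symmetry; apply Nat.ltb_lt; lia). auto. }
  assert (qN : q NN = zBS).
  { unfold q, NN. replace (Nat.ltb (n + K) n) with false by (symmetry; apply Nat.ltb_ge; lia). rewrite Nat.ltb_irrefl. auto. }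
  destruct (Nat.lt_ge_cases u n) as [Lu|Lu]; destruct (Nat.lt_ge_cases v n) as [Lv|Lv].
  - left. rewrite !q_src by auto. intro C. apply Huv. apply hz; auto.
  - destruct (Nat.eq_dec v NN) as [->|ne].
    + left. rewrite q_src, qN by auto. apply hBS; auto.
    + right. rewrite Tu by auto. rewrite Sv by lia. pose proof (lt_0_INR (S (v - n)) ltac:(lia)). lra.
  - destruct (Nat.eq_dec u NN) as [->|ne].
    + left. rewrite (q_src v Lv), qN. intro C. apply (hBS v Lv). symmetry. exact C.
    + right. rewrite Tv by auto. rewrite Su by lia. pose proof (lt_0_INR (S (u - n)) ltac:(lia)). lra.
  - destruct (Nat.eq_dec u NN) as [->|ne]; destruct (Nat.eq_dec v NN) as [->|ne'].
    + tauto.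
    + right. rewrite Tu by auto. rewrite Sv by lia. pose proof (lt_0_INR (S (v - n)) ltac:(lia)). lra.
    + right. rewrite Tv by auto. rewrite Su by lia. pose proof (lt_0_INR (S (u - n)) ltac:(lia)). lra.
    + right. rewrite Su, Sv by lia. intro C. apply INR_eq in C. lia.
Qed.

Lemma Tb_FQST : exists e0, 0 < e0 /\ forall e, 0 < e < e0 -> is_FQST n z zBS (Tb e).
Proof.
  destruct (min_pos_2 (fun u v => fst (q u) - fst (q v)) NN) as [d [Hd Hmin]].
  exists (d / (INR NN + 1)). pose proof (pos_INR NN).
  split; [apply Rdiv_lt_0_compat; lra|]. intros e He.
  split; [|split].
  - apply sink_tree'.
  - apply flow'.
  - simpl fk. fold NN. intros u v Hu Hv E.
    destruct (Nat.eq_dec u v) as [|ne]; auto. exfalso.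
    assert (E1 : fst (q u) + e * g u = fst (q v) + e * g v) by (rewrite <- !fpos_fst, E; auto).
    assert (E2 : snd (q u) = snd (q v)) by (rewrite <- !fpos_snd with (e := e), E; auto).
    pose proof (g_bound u). pose proof (g_bound v).
    assert (Heps : e * (INR NN + 1) < d).
    { destruct He as [_ He]. apply (Rmult_lt_compat_r (INR NN + 1)) in He; [|lra].
      unfold Rdiv in He. rewrite Rmult_assoc, Rinv_l in He by lra. lra. }
    destruct (Req_dec (fst (q u) - fst (q v)) 0) as [Z|Z].
    + assert (g u = g v).
      { assert (Hz0 : e * (g u - g v) = 0) by lra. apply Rmult_integral in Hz0. destruct Hz0; lra. }
      destruct (q_or_g u v Hu Hv ne) as [C|C]; [|auto].
      apply C. destruct (q u), (q v). simpl in *. f_equal; lra.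
    + specialize (Hmin u v Hu Hv Z). simpl in Hmin.
      replace (fst (q u) - fst (q v)) with (e * (g v - g u)) in Hmin by lra.
      rewrite Rabs_mult, Rabs_pos_eq in Hmin by lra.
      assert (Rabs (g v - g u) <= INR NN) by (apply Rabs_le; lra).
      assert (e * Rabs (g v - g u) <= e * INR NN) by (apply Rmult_le_compat_l; lra). nra.
Qed.

End BST.


Lemma INR_off m k : INR (off m k) = sumR (seq 0 k) (fun v => INR (m v)).
Proof. induction k; [simpl; auto|]. cbn [off]. rewrite plus_INR, IHk, seq_S, sumR_app.
  cbn [plus]. rewrite sumR_cons, sumR_nil. lra. Qed.

Lemma limit_arg a b C e1 : 0 < e1 -> 0 <= C -> (forall e, 0 < e < e1 -> a <= b + e * C) -> a <= b.
Proof.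
  intros He1 HC H. destruct (Rle_lt_dec a b) as [|Hab]; auto. exfalso.
  set (e := Rmin (e1 / 2) ((a - b) / (2 * (C + 1)))).
  assert (Hepos : 0 < e) by (apply Rmin_pos; apply Rdiv_lt_0_compat; lra).
  assert (e <= e1 / 2) by apply Rmin_l.
  assert (Hle : e <= (a - b) / (2 * (C + 1))) by apply Rmin_r.
  specialize (H e ltac:(lra)).
  assert (e * (C + 1) <= (a - b) / 2).
  { apply (Rmult_le_compat_r (C + 1)) in Hle; [|lra].
    replace ((a - b) / (2 * (C + 1)) * (C + 1)) with ((a - b) / 2) in Hle by (field; lra). auto. }
  nra.
Qed.

Lemma flow_ge1 n p f v : valid_flow n n p f -> (v < n)%nat -> 1 <= f v.
Proof.
  intros [H1 _] Hv. destruct (H1 v Hv) as [_ E].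
  replace (Nat.ltb v n) with true in E by (symmetry; apply Nat.ltb_lt; lia).
  assert (0 <= inflow n p f v).
  { unfold inflow. apply sumR_nonneg. intros u Hu. apply filter_In in Hu. destruct Hu as [Hu _].
    apply in_seq in Hu. destruct (H1 u ltac:(lia)); lra. }
  lra.
Qed.

Theorem mainTheorem17 (c : R) (n : nat) (z : nat -> point) (zBS : point)
  (hc : 0 < c) (hn : (1 <= n)%nat)
  (hz : forall i j, (i < n)%nat -> (j < n)%nat -> z i = z j -> i = j)
  (hBS : forall i, (i < n)%nat -> z i <> zBS)
  (T : fqst) (hT : is_MFQST c n z zBS T)
  (p : nat -> nat) (hp : is_EMST n z zBS p)
  (f : nat -> R) (hf : valid_flow n n p f)
  (m : nat -> nat) (hm : bead_counts c n z zBS p f m) :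
  INR (fk T) <=
  / c * (BST_cost c n z zBS p f m
         - / INR (n + fk T + 1) * sumR (seq 0 n) (fun i => dist2 (z i) zBS)).
Proof.
  destruct hp as [Hp _]. destruct hT as [HTF Hmin].
  destruct (Tb_FQST n z zBS p f m Hp hf hz hBS) as [e0 [He0 HT']].
  set (U := sumR (seq 0 n) (fun v => f v * dist2 (z v) (Bv n z zBS p v) / INR (S (m v)))).
  assert (C1 : Lc c n z zBS T <= U + c * INR (K n m)).
  { apply (limit_arg _ _ (Cc n z zBS p f m) (Rmin e0 1)).
    - apply Rmin_pos; lra.
    - apply Cc_ge0; auto.
    - intros e He. assert (e < e0) by (eapply Rlt_le_trans; [apply He| apply Rmin_l]).
      assert (e < 1) by (eapply Rlt_le_trans; [apply He| apply Rmin_r]).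
      apply (Rle_trans _ (Lc c n z zBS (Tb n z zBS p f m e))); [apply Hmin, HT'; lra|].
      unfold Lc. pose proof (L_Tb n z zBS p f m Hp hf e ltac:(lra)) as HL.
      change (fk (Tb n z zBS p f m e)) with (K n m). fold U in HL. lra. }
  assert (C2 : U + c * INR (K n m) <= BST_cost c n z zBS p f m).
  { unfold BST_cost, K. rewrite INR_off. apply Rplus_le_compat_r.
    unfold U. apply sumR_le_in. intros v Hv. apply in_seq in Hv.
    pose proof (flow_ge1 n p f v hf ltac:(lia)).
    assert (Ht : tpos n z zBS v = z v) by (unfold tpos; replace (Nat.ltb v n) with true by (symmetry; apply Nat.ltb_lt; lia); auto).
    rewrite Ht. unfold Defs.dist. fold (Bv n z zBS p v).
    set (D := dist2 (z v) (Bv n z zBS p v)). assert (HD : 0 <= D) by apply dist2_ge0.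
    assert (HM : 0 < INR (S (m v))) by (apply lt_0_INR; lia).
    assert (EE : INR (S (m v)) * (f v * (sqrt D / INR (S (m v))) ^ 2) =
      f v * (sqrt D * sqrt D) / INR (S (m v))) by (field; lra).
    rewrite EE, sqrt_sqrt by auto. lra. }
  destruct HTF as (Hst & Hfl & _).
  pose proof (L_lower n (n + fk T) (fpar T) (fflow T) (fpos n z zBS T) Hst Hfl ltac:(lia)) as C3.
  rewrite (sumR_ext_in (seq 0 n) _ (fun i => dist2 (z i) zBS)) in C3.
  2:{ intros i Hi. apply in_seq in Hi. unfold fpos.
      replace (Nat.ltb i n) with true by (symmetry; apply Nat.ltb_lt; lia).
      replace (Nat.ltb (n + fk T) n) with false by (symmetry; apply Nat.ltb_ge; lia).
      rewrite Nat.ltb_irrefl. auto. }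
  change (sumR (seq 0 (n + fk T)) (fun v => fflow T v * dist2 (fpos n z zBS T v) (fpos n z zBS T (fpar T v))))
    with (L n z zBS T) in C3.
  unfold Lc in C1.
  assert (Hk : c * INR (fk T) <= BST_cost c n z zBS p f m - / INR (n + fk T + 1) * sumR (seq 0 n) (fun i => dist2 (z i) zBS)) by lra.
  replace (INR (fk T)) with (/ c * (c * INR (fk T))) by (field; lra).
  apply Rmult_le_compat_l; [left; apply Rinv_0_lt_compat; auto|]. auto.
Qed.
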